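(* Let $X=[0,1]$ with the usual metric, $U=\{0,1\}$, and let $F_0,F_1:[0,1]\to[0,1]$ be given by $F_0(x)=\frac12$ for $0\le x<\frac14$, $F_0(x)=2(x-\frac12)+1$ for $\frac14\le x<\frac12$, $F_0(x)=1$ for $\frac12\le x\le1$; and $F_1(x)=12(x-\frac14)^2+\frac14$ for $0\le x<\frac14$, $F_1(x)=(x-\frac14)^2+\frac14$ for $\frac14\le x\le1$. Consider the control system $x_{n+1}=F_{u_n}(x_n)$ and let $Q=[0,\frac14]$. Then $Q$ is mean equi-invariant but not finitely equi-invariant in the mean.
   Context: For $\omega=(\omega_0,\omega_1,\dots)\in\mathscr U=U^{\mathbb N_0}$ and $x\in X$: $\phi(0,x,\omega)=x$, $\phi(k,x,\omega)=F_{\omega_{k-1}}\circ\cdots\circ F_{\omega_0}(x)$. $d(y,Q)=\inf_{q\in Q}|y-q|$, $B(x,\delta)$ open ball, $\mathbb N=\{1,2,\dots\}$. A point $x\in Q$ is a mean equi-invariant point of $Q$ if for every $\varepsilon>0$ there exist $\delta>0$ and $\omega\in\mathscr U$ such that $\limsup_{n\to\infty}\frac1n\sum_{i=0}^{n-1}d(\phi(i,y,\omega),Q)<\varepsilon$ for all $y\in B(x,\delta)\cap Q$. It is a finitely equi-invariant point in the mean of $Q$ if for every $\varepsilon>0$ there exist $\delta>0$ and a finite set $F\subset\mathscr U$ such that for every $y\in B(x,\delta)\cap Q$ there is $\omega\in F$ with $\frac1n\sum_{i=0}^{n-1}d(\phi(i,y,\omega),Q)<\varepsilon$ for all $n\in\mathbb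 N$. $Q$ has one of these properties if all its points do. *)

(* Defs.v *)
From HB Require Import structures.
From mathcomp Require Import all_boot all_order all_algebra.
From mathcomp Require Import all_classical all_reals all_analysis.
Set Implicit Arguments. Unset Strict Implicit. Unset Printing Implicit Defensive.
Import Order.TTheory GRing.Theory Num.Theory.
Local Open Scope classical_set_scope.
Local Open Scope ring_scope.

Fixpoint phi {X U : Type} (F : U -> X -> X) (k : nat) (x : X) (w : nat -> U) : X :=
  match k with
  | 0%N => x
  | k'.+1 => F (w k') (phi F k' x w)
  end.

Definition dist_set {R : realType} (y : R) (Q : set R) : R :=
  inf [set `|y - q| | q in Q].

Definition mean_dist {R : realType} {U : Type} (F : U -> R -> R) (Q : set R)
  (y : R) (w : nat -> U) (n : nat) : R :=
  n%:R^-1 * \sum_(i < n) dist_set (phi F i y w) Q.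

Definition mean_equi_invariant_point {R : realType} {U : Type}
  (F : U -> R -> R) (Q : set R) (x : R) : Prop :=
  forall eps : R, 0 < eps ->
    exists delta : R, 0 < delta /\ exists w : nat -> U,
      forall y : R, `|y - x| < delta -> Q y ->
        (limn_esup (fun n => (mean_dist F Q y w n)%:E) < eps%:E)%E.

Definition finitely_equi_invariant_mean_point {R : realType} {U : Type}
  (F : U -> R -> R) (Q : set R) (x : R) : Prop :=
  forall eps : R, 0 < eps ->
    exists delta : R, 0 < delta /\ exists Fs : set (nat -> U), finite_set Fs /\
      forall y : R, `|y - x| < delta -> Q y ->
        exists w, Fs w /\ forall n : nat, (0 < n)%N -> mean_dist F Q y w n < eps.

Definition mean_equi_invariant {R : realType} {U : Type}
  (F : U -> R -> R) (Q : set R) : Prop :=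
  forall x, Q x -> mean_equi_invariant_point F Q x.

Definition finitely_equi_invariant_mean {R : realType} {U : Type}
  (F : U -> R -> R) (Q : set R) : Prop :=
  forall x, Q x -> finitely_equi_invariant_mean_point F Q x.

(* The example: U = {0,1} encoded as bool (false = 0, true = 1). *)
Definition F0 {R : realType} (x : R) : R :=
  if x < 4^-1 then 2^-1
  else if x < 2^-1 then 2 * (x - 2^-1) + 1
  else 1.

Definition F1 {R : realType} (x : R) : R :=
  if x < 4^-1 then 12 * (x - 4^-1) ^+ 2 + 4^-1
  else (x - 4^-1) ^+ 2 + 4^-1.

Definition Fex {R : realType} (u : bool) : R -> R := if u then F1 else F0.

Definition Qex {R : realType} : set R := [set x | 0 <= x <= 4^-1].

(* Main.v *)
Require Import Defs.
From HB Require Import structures.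
From mathcomp Require Import all_boot all_order all_algebra.
From mathcomp Require Import all_classical all_reals all_analysis.
Set Implicit Arguments. Unset Strict Implicit. Unset Printing Implicit Defensive.
Import Order.TTheory GRing.Theory Num.Theory.
Local Open Scope classical_set_scope.
Local Open Scope ring_scope.
From mathcomp Require Import lra.

Section S.
Variable R : realType.

Lemma inf_min (S : set R) m : S m -> (forall s, S s -> m <= s) -> inf S = m.
Proof.
move=> Sm lb; apply/eqP; rewrite eq_le; apply/andP; split.
  by apply: (ge_inf _ Sm); exists m.
by apply: lb_le_inf; [exists m|].
Qed.

Lemma dist_in y : Qex y -> dist_set y (@Qex R) = 0.
Proof.
move=> Qy; apply: inf_min; first by exists y => //; rewrite subrr normr0.
by move=> _ [q _ <-].
Qed.

Lemma dist_ge y : 4^-1 <= y -> dist_set y (@Qex R) = y - 4^-1.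
Proof.
move=> hy; apply: inf_min.
  exists 4^-1; first by rewrite /Qex /= lexx andbT.
  by rewrite ger0_norm // subr_ge0.
move=> _ [q /andP[q0 q1] <-].
rewrite ger0_norm; first by rewrite lerD2l lerN2.
rewrite subr_ge0; exact: le_trans hy.
Qed.

Lemma neg_part : ~ finitely_equi_invariant_mean (@Fex R) (@Qex R).
Proof.
move=> H.
have Q0 : (@Qex R) 0 by rewrite /Qex /= lexx /=.
have [d [d0 [Fs [_ HF]]]] := H 0 Q0 (8^-1) ltac:(by []).
have [w [_ Hw]] := HF 0 ltac:(by rewrite subrr normr0) Q0.
have := Hw 2%N isT.
rewrite /mean_dist big_ord_recr big_ord_recr big_ord0 /= add0r.
rewrite (dist_in Q0) add0r.
rewrite /Fex; case: (w 0%N).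
- rewrite /F1 ifT; last by [].
  rewrite dist_ge; rewrite expr2; [lra|lra].
- rewrite /F0 ifT; last by [].
  rewrite dist_ge; lra.
Qed.

Definition wt : nat -> bool := fun _ => true.

Lemma orbit y : Qex y -> forall i, (0 < i)%N ->
  4^-1 <= phi (@Fex R) i y wt <= 4^-1 + (3/4)^+i.
Proof.
move=> /andP[y0 y1]; elim=> [//|i IH] _ /=.
rewrite /Fex /wt /F1.
case: (posnP i) => [->|ip] /=.
  rewrite expr1; case: ifP => hy.
    apply/andP; split; first by rewrite lerDr; apply: mulr_ge0 => //; exact: sqr_ge0.
    rewrite expr2; nra.
  have -> : y = 4^-1 by apply/eqP; rewrite eq_le y1 /= leNgt hy.
  rewrite subrr expr2 mulr0 add0r lexx /=; lra.
have /andP[h1 h2] := IH ip.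
rewrite ltNge h1 /=.
set t := phi Fex i y wt - 4^-1.
have t0 : 0 <= t by rewrite subr_ge0.
have t1 : t <= (3/4)^+i by rewrite lerBlDl.
have pi : (3/4 : R)^+i <= 3/4.
  rewrite -(prednK ip) exprS.
  have : (3/4 : R)^+i.-1 <= 1 by apply: exprn_ile1; lra.
  lra.
apply/andP; split; first by rewrite lerDr sqr_ge0.
rewrite exprS -/t expr1 exprS.
have tp : t <= 3/4 by exact: le_trans pi.
have : t * t <= t * (3/4) by apply: ler_wpM2l.
lra.
Qed.

Lemma distb y : Qex y -> forall i, dist_set (phi (@Fex R) i y wt) Qex <= (3/4)^+i.
Proof.
move=> Qy [|i]; first by rewrite /= dist_in // expr0.
have /andP[h1 h2] := orbit Qy (isT : (0 < i.+1)%N).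
by rewrite dist_ge // lerBlDl.
Qed.

Lemma geo n : \sum_(i < n) (3/4 : R)^+i = 4 * (1 - (3/4)^+n).
Proof.
elim: n => [|n IH]; first by rewrite big_ord0 expr0 subrr mulr0.
rewrite big_ord_recr /= IH exprS; lra.
Qed.

Lemma meanb y n : Qex y -> (0 < n)%N -> mean_dist (@Fex R) Qex y wt n <= 4 / n%:R.
Proof.
move=> Qy n0; rewrite /mean_dist mulrC ler_pM2r ?invr_gt0 ?ltr0n //.
apply: (le_trans (y := \sum_(i < n) (3/4 : R)^+i)).
  by apply: ler_sum => i _; exact: distb.
rewrite geo; have : 0 <= (3/4 : R)^+n by apply: exprn_ge0; lra.
lra.
Qed.


Lemma pos_part : mean_equi_invariant (@Fex R) (@Qex R).
Proof.
move=> x Qx eps e0; exists 1; split => //; exists wt => y _ Qy.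
set N := (Num.truncn (8 / eps)).+1.
have hN : 8 / eps < N%:R by exact: Num.Theory.truncnS_gt.
have N0 : (0 < N)%N by [].
have keyN : 4 / N%:R <= eps / 2.
  rewrite ler_pdivrMr ?ltr0n // mulrAC ler_pdivlMr //.
  rewrite ltr_pdivrMr // in hN; lra.
apply: (le_lt_trans (y := (eps / 2)%:E)); last by rewrite lte_fin; lra.
rewrite limn_esup_lim; apply: lime_le; first exact: is_cvg_esups.
apply: filterS (nbhs_infty_ge N) => n Nn.
rewrite /esups /sdrop /=; apply: ge_ereal_sup => _ [k /= nk <-]; rewrite lee_fin.
have k0 : (0 < k)%N by apply: leq_trans N0 (leq_trans Nn nk).
apply: le_trans (meanb Qy k0) _; apply: le_trans keyN.
rewrite ler_pM2l // lef_pV2 ?posrE ?ltr0n // ?ler_nat //.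
exact: leq_trans Nn nk.
Qed.

End S.

Theorem mainTheorem16 (R : realType) :
  mean_equi_invariant (@Fex R) (@Qex R) /\
  ~ finitely_equi_invariant_mean (@Fex R) (@Qex R).
Proof. split; [exact: pos_part | exact: neg_part]. Qed.
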